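(* For every $n \in \mathbb N$ and $q \in \{0,1,\dots,\lfloor n/2\rfloor\}$, $$\sum_{\mathbf m \in S_{n,q,1}} \pi_{\mathbf m} = \frac{1}{(n-2q)!\, q!\, 2^q}.$$
   Context: $S_{n,q,1} = \{\mathbf m=(m_1,\dots,m_{n-q}) \in \{0,1\}^{n-q} : m_1+\cdots+m_{n-q} = q\}$, and for such $\mathbf m$, $\pi_{\mathbf m} = \prod_{i=1}^{n-q} [m_i+m_{i+1}+\cdots+m_{n-q} + (n-q-i+1)]^{-1}$. *)

(* Defs.v *)
From mathcomp Require Import all_boot all_order all_algebra.
Set Implicit Arguments. Unset Strict Implicit. Unset Printing Implicit Defensive.
Import Order.TTheory GRing.Theory Num.Theory.

(* Vectors m = (m_1,...,m_N) in {0,1}^N are finite functions 'I_N -> bool,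
   with 0-based index i corresponding to the paper's index i+1. *)

(* S_{n,q,1} membership: sum of entries of m (of length N = n - q) equals q *)
Definition inS (N q : nat) (m : {ffun 'I_N -> bool}) : bool :=
  (\sum_(i < N) (m i : nat))%N == q.

(* pi_m = prod_{i=1}^{N} [m_i + ... + m_N + (N - i + 1)]^{-1};
   with 0-based i this is prod_{i<N} [sum_{j >= i} m_j + (N - i)]^{-1}. *)
Definition pi_m (N : nat) (m : {ffun 'I_N -> bool}) : rat :=
  \prod_(i < N)
    (((\sum_(j < N | (i <= j)%N) (m j : nat)) + (N - i))%N%:R)^-1.

(* Main.v *)
Require Import Defs.
From mathcomp Require Import all_boot all_order all_algebra.
Import Order.TTheory GRing.Theory Num.Theory.
Local Open Scope ring_scope.

Definition gext {N} (b : bool) (m : {ffun 'I_N -> bool}) : {ffun 'I_N.+1 -> bool} :=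
  [ffun i => if unlift ord0 i is Some j then m j else b].

Lemma gext0 N (b : bool) (m : {ffun 'I_N -> bool}) : gext b m ord0 = b.
Proof. by rewrite ffunE unlift_none. Qed.
Lemma gextS N (b : bool) (m : {ffun 'I_N -> bool}) j : gext b m (lift ord0 j) = m j.
Proof. by rewrite ffunE liftK. Qed.

Lemma sum_gext N (b : bool) (m : {ffun 'I_N -> bool}) : (\sum_(i < N.+1) (gext b m i : nat) = b + \sum_(i < N) (m i : nat))%N.
Proof. by rewrite big_ord_recl gext0; congr (_ + _)%N; apply eq_bigr => i _; rewrite gextS. Qed.

Lemma pi_gext N (b : bool) (m : {ffun 'I_N -> bool}) : pi_m (gext b m) =
  ((b + \sum_(i < N) (m i : nat) + N.+1)%N%:R)^-1 * pi_m m.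
Proof.
rewrite /pi_m big_ord_recl; congr (_ * _).
  rewrite subn0; congr ((_ + _)%N%:R^-1); rewrite -sum_gext.
  by apply eq_bigl => j.
apply eq_bigr => i _; congr ((_ + _)%N%:R^-1).
  rewrite big_mkcond big_ord_recl /= add0n [RHS]big_mkcond.
  by apply eq_bigr => j _; rewrite gextS /bump !leq0n !add1n ltnS.
Qed.

Definition G N q := \sum_(m : {ffun 'I_N -> bool} | inS q m) pi_m m.

Lemma G_rec N q : G N.+1 q =
  ((q + N.+1)%N%:R)^-1 * (G N q + (if q is q'.+1 then G N q' else 0)).
Proof.
rewrite /G.
rewrite (reindex (fun p : bool * {ffun 'I_N -> bool} => gext p.1 p.2)) /=; last first.
  apply: onW_bij.
  exists (fun m' : {ffun 'I_N.+1 -> bool} => (m' ord0, [ffun j => m' (lift ord0 j)])).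
    move=> [b m] /=; rewrite gext0; congr pair; apply/ffunP => j; by rewrite ffunE gextS.
  move=> m'; apply/ffunP => i; rewrite ffunE.
  case: unliftP => [j ->|->] //; by rewrite ffunE.
rewrite -(pair_big_dep xpredT (fun b m => inS q (gext b m)) (fun b m => pi_m (gext b m))) /=.
rewrite big_bool /= addrC mulrDr; congr (_ + _).
  rewrite mulr_sumr; apply eq_big => m; rewrite /inS ?sum_gext //.
  by rewrite pi_gext => /eqP <-.
case: q => [|q].
  by rewrite big_pred0 ?mulr0 // => m; rewrite /inS sum_gext.
rewrite mulr_sumr; apply eq_big => m; rewrite /inS ?sum_gext ?add1n ?eqSS //.
by rewrite pi_gext add1n => /eqP <-.
Qed.
From mathcomp Require Import ring lra zify.
Definition H N q : rat := if (q <= N)%N then (((N - q)`! * q`! * 2 ^ q)%N%:R)^-1 else 0.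

Lemma fnz n : (n`!)%:R != 0 :> rat.
Proof. by rewrite pnatr_eq0 -lt0n fact_gt0. Qed.
Lemma Snz n : (n.+1)%:R != 0 :> rat.
Proof. by rewrite pnatr_eq0. Qed.
Lemma p2nz n : 2%:R ^+ n != 0 :> rat.
Proof. by rewrite expf_neq0 // pnatr_eq0. Qed.

Lemma H_rec N q : H N.+1 q =
  ((q + N.+1)%N%:R)^-1 * (H N q + (if q is q'.+1 then H N q' else 0)).
Proof.
rewrite /H.
case: (ltngtP q N.+1) => [hq|hq|->].
- rewrite ltnS in hq; rewrite hq.
  have [a ->] : exists a, N = (a + q)%N by exists (N - q)%N; rewrite subnK.
  rewrite -addSn !addnK.
  case: q hq => [|q] hq.
    rewrite fact0 expn0 !muln1 addn0 add0n addr0 factS natrM.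
    have h1 := fnz a; have h2 := Snz a. field. by rewrite h1 nat1r.
  rewrite (leq_trans (leqnSn q)) ?leq_addl //.
  have -> : (a + q.+1 - q = a.+1)%N by rewrite addnS -addSn addnK.
  rewrite !factS expnS !natrM !natrD !natrX -!nat1r.
  have h1 := fnz a; have h3 := fnz q; have h5 := p2nz q.
  field. rewrite addr0 h1 h3 expf_neq0 //= !nat1r -!natrD !pnatr_eq0.
  by rewrite addSn.
- case: q hq => // q hq.
  have -> : (q.+1 <= N)%N = false by apply/negbTE; rewrite -ltnNge; lia.
  have -> : (q <= N)%N = false by apply/negbTE; rewrite -ltnNge; lia.
  by rewrite addr0 mulr0.
- rewrite ltnn leqnn !subnn fact0 add0r factS.
  rewrite !mul1n !natrM expnS !natrM !natrX natrD -!nat1r.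
  have h1 := fnz N; have h5 := p2nz N.
  field. rewrite addr0 h1 expf_neq0 //= !nat1r -!natrD !pnatr_eq0.
  by rewrite addSn.
Qed.

Lemma G_H N q : G N q = H N q.
Proof.
elim: N q => [|N IH] q.
  rewrite /G /H; case: q => [|q].
    rewrite leqnn subnn /= invr1.
    rewrite (eq_bigl xpredT) => [|m]; last by rewrite /inS big_ord0.
    rewrite (eq_bigr (fun _ => 1)) => [|m _]; last by rewrite /pi_m big_ord0.
    by rewrite sumr_const card_ffun card_bool card_ord.
  by rewrite big_pred0 // => m; rewrite /inS big_ord0.
by rewrite G_rec H_rec; case: q => [|q]; rewrite !IH.
Qed.

Theorem lemma3 (n q : nat) (hq : (q <= n./2)%N) :
  \sum_(m : {ffun 'I_(n - q) -> bool} | inS q m) pi_m m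
  = (((n - 2 * q)`! * q`! * 2 ^ q)%N%:R)^-1 :> rat.
Proof.
have := G_H (n - q) q; rewrite /G /H => ->.
have h : (q <= n - q)%N by move: hq; rewrite -divn2; lia.
by rewrite h; congr ((_ * _ * _)%N%:R^-1); congr (_`!); lia.
Qed.
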